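(* Let $X$ be a complex Banach space with a Schauder decomposition $\mathcal{D}=\{X_n:n\ge1\}$, let $K=\sup_{N\ge1}\|P_N\|$ and $Q_N=I_X-P_N$. Let $(a_n)_{n\ge1}$ be a nondecreasing sequence in $(0,\infty)$ with $\lim_na_n=\infty$, and let $A^{-1}\in B(X)$ be given by $A^{-1}x=\sum_{n\ge1}a_n^{-1}p_n(x)$. Then for every $t>0$ and $N\ge1$, $$\|e^{-tA^{-1}}-Q_N\|\le2(1+K)\big(e^{-t/a_N}+1-e^{-t/a_{N+1}}\big).$$ In particular, for $a_n=(n!)^3$ and $t_N=N(N!)^3$ one has $\sum_{N\ge1}\|e^{-t_NA^{-1}}-Q_N\|<\infty$.
   Context: A Schauder decomposition of $X$ is a sequence $\mathcal{D}=\{X_n:n\ge1\}$ of closed subspaces such that every $x\in X$ has a unique expansion $x=\sum_nx_n$ with $x_n\in X_n$; $p_n(x)=x_n$ and $P_N=\sum_{n=1}^Np_n$; the set $\{P_N\}$ is bounded. Here $A^{-1}$ is the inverse of the sectorial operator $Ax=\sum_na_np_n(x)$, $D(A)=\{x:\sum_na_np_n(x)\text{ converges}\}$, and $e^{-tA^{-1}}$ is the exponential of the bounded operator $-tA^{-1}$ (equal to $x\mapsto\sum_ne^{-t/a_n}p_n(x)$). *)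

(* Defs.v *)
From Stdlib Require Import Reals Lra Classical ClassicalEpsilon Factorial.
Open Scope R_scope.

(** A complex Banach space, presented as a real vector space equipped with a
    real-linear map [cJ] ("multiplication by i") with [cJ (cJ x) = - x], so that
    complex scalar multiplication is (a + i b) x := a x + b (cJ x); the norm is
    homogeneous for complex scalars, and the space is complete. *)
Record CBanach := {
  cb_car :> Type;
  cb_zero : cb_car;
  cb_add : cb_car -> cb_car -> cb_car;
  cb_opp : cb_car -> cb_car;
  cb_scal : R -> cb_car -> cb_car;
  cb_J : cb_car -> cb_car;
  cb_norm : cb_car -> R;
  cb_add_assoc : forall x y z, cb_add x (cb_add y z) = cb_add (cb_add x y) z;
  cb_add_comm : forall x y, cb_add x y = cb_add y x;
  cb_add_0 : forall x, cb_add x cb_zero = x;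
  cb_add_opp : forall x, cb_add x (cb_opp x) = cb_zero;
  cb_scal_assoc : forall a b x, cb_scal a (cb_scal b x) = cb_scal (a * b) x;
  cb_scal_1 : forall x, cb_scal 1 x = x;
  cb_scal_distr_l : forall a x y, cb_scal a (cb_add x y) = cb_add (cb_scal a x) (cb_scal a y);
  cb_scal_distr_r : forall a b x, cb_scal (a + b) x = cb_add (cb_scal a x) (cb_scal b x);
  cb_J_add : forall x y, cb_J (cb_add x y) = cb_add (cb_J x) (cb_J y);
  cb_J_scal : forall a x, cb_J (cb_scal a x) = cb_scal a (cb_J x);
  cb_J_J : forall x, cb_J (cb_J x) = cb_opp x;
  cb_norm_eq0 : forall x, cb_norm x = 0 -> x = cb_zero;
  cb_norm_triangle : forall x y, cb_norm (cb_add x y) <= cb_norm x + cb_norm y;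
  cb_norm_cscal : forall a b x,
    cb_norm (cb_add (cb_scal a x) (cb_scal b (cb_J x))) = sqrt (a ^ 2 + b ^ 2) * cb_norm x;
  cb_complete : forall u : nat -> cb_car,
    (forall eps, 0 < eps -> exists M, forall m n, (M <= m)%nat -> (M <= n)%nat ->
        cb_norm (cb_add (u m) (cb_opp (u n))) < eps) ->
    exists l, forall eps, 0 < eps -> exists M, forall n, (M <= n)%nat ->
        cb_norm (cb_add (u n) (cb_opp l)) < eps
}.

Arguments cb_zero {c}.
Arguments cb_add {c}.
Arguments cb_opp {c}.
Arguments cb_scal {c}.
Arguments cb_J {c}.
Arguments cb_norm {c}.

Section Defs.
Variable X : CBanach.

Definition vsub (x y : X) : X := cb_add x (cb_opp y).

Definition seq_conv (u : nat -> X) (l : X) : Prop :=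
  forall eps, 0 < eps -> exists M, forall n, (M <= n)%nat -> cb_norm (vsub (u n) l) < eps.

(** [vsum u m N] = u m + u (m+1) + ... + u N  (zero if N < m). *)
Fixpoint vsum (u : nat -> X) (m N : nat) : X :=
  match N with
  | O => if Nat.eqb m 0 then u O else cb_zero
  | S N' => cb_add (vsum u m N') (if Nat.leb m (S N') then u (S N') else cb_zero)
  end.

Definition series_conv (m : nat) (u : nat -> X) (l : X) : Prop :=
  seq_conv (fun N => vsum u m N) l.

(** Limit of a sequence (0 if it does not converge). *)
Definition vlim (u : nat -> X) : X :=
  epsilon (inhabits cb_zero) (fun l => seq_conv u l).

Definition series_sum (m : nat) (u : nat -> X) : X := vlim (fun N => vsum u m N).

Definition closed_subspace (S : X -> Prop) : Prop :=
  S cb_zero /\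
  (forall x y, S x -> S y -> S (cb_add x y)) /\
  (forall a x, S x -> S (cb_scal a x)) /\
  (forall x, S x -> S (cb_J x)) /\
  (forall u l, (forall n, S (u n)) -> seq_conv u l -> S l).

Definition Pn (p : nat -> X -> X) (N : nat) (x : X) : X := vsum (fun n => p n x) 1 N.

Definition Qn (p : nat -> X -> X) (N : nat) (x : X) : X := vsub x (Pn p N x).

Definition schauder_decomposition (Xs : nat -> X -> Prop) (p : nat -> X -> X) : Prop :=
  (forall n, (1 <= n)%nat -> closed_subspace (Xs n)) /\
  (forall x n, (1 <= n)%nat -> Xs n (p n x)) /\
  (forall x, series_conv 1 (fun n => p n x) x) /\
  (forall x (y : nat -> X), (forall n, (1 <= n)%nat -> Xs n (y n)) ->
      series_conv 1 y x -> forall n, (1 <= n)%nat -> y n = p n x) /\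
  (exists M, forall N x, (1 <= N)%nat -> cb_norm (Pn p N x) <= M * cb_norm x).

(** Supremum of a set of reals (0 if no least upper bound exists). *)
Definition Rsup (S : R -> Prop) : R := epsilon (inhabits 0) (fun r => is_lub S r).

Definition opnorm (T : X -> X) : R :=
  Rsup (fun y => exists x, cb_norm x <= 1 /\ y = cb_norm (T x)).

Definition Kconst (p : nat -> X -> X) : R :=
  Rsup (fun y => exists N, (1 <= N)%nat /\ y = opnorm (Pn p N)).

Definition Ainv (a : nat -> R) (p : nat -> X -> X) (x : X) : X :=
  series_sum 1 (fun n => cb_scal (/ a n) (p n x)).

Definition opexp (T : X -> X) (x : X) : X :=
  series_sum 0 (fun k => cb_scal (/ INR (fact k)) (Nat.iter k T x)).

Definition semigroup_Ainv (a : nat -> R) (p : nat -> X -> X) (t : R) : X -> X :=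
  opexp (fun x => cb_scal (- t) (Ainv a p x)).

End Defs.

Arguments vsub {X}.
Arguments Pn {X}.
Arguments Qn {X}.
Arguments opnorm {X}.
Arguments Kconst {X}.
Arguments Ainv {X}.
Arguments semigroup_Ainv {X}.
Arguments schauder_decomposition {X}.

(* Main.v *)
Require Import Defs.
From Stdlib Require Import Reals Lra Lia Factorial ClassicalEpsilon Arith.
Open Scope R_scope.


Arguments cb_add_assoc {c}. Arguments cb_add_comm {c}. Arguments cb_add_0 {c}.
Arguments cb_add_opp {c}. Arguments cb_scal_assoc {c}. Arguments cb_scal_1 {c}.
Arguments cb_scal_distr_l {c}. Arguments cb_scal_distr_r {c}. Arguments cb_norm_triangle {c}.
Arguments cb_norm_cscal {c}. Arguments cb_norm_eq0 {c}. Arguments cb_complete {c}.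

Section Alg.
Variable X : CBanach.
Implicit Types x y z w : X.

Notation add := (@cb_add X).
Notation opp := (@cb_opp X).
Notation scal := (@cb_scal X).
Notation nrm := (@cb_norm X).
Notation zero := (@cb_zero X).

Lemma add_0_l x : add zero x = x.
Proof. rewrite cb_add_comm; apply cb_add_0. Qed.

Lemma opp_add_l x : add (opp x) x = zero.
Proof. rewrite cb_add_comm; apply cb_add_opp. Qed.

Lemma add_cancel_l x y z : add x y = add x z -> y = z.
Proof.
  intro H. rewrite <- (add_0_l y), <- (add_0_l z), <- (opp_add_l x).
  rewrite <- !cb_add_assoc, H. reflexivity.
Qed.

Lemma opp_unique x y : add x y = zero -> y = opp x.
Proof. intro H. apply (add_cancel_l x). rewrite H, cb_add_opp. reflexivity. Qed.

Lemma scal_0_l x : scal 0 x = zero.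
Proof.
  apply (add_cancel_l (scal 0 x)). rewrite cb_add_0, <- cb_scal_distr_r.
  f_equal; ring.
Qed.

Lemma scal_0_r a : scal a zero = zero.
Proof. rewrite <- (scal_0_l zero), cb_scal_assoc, Rmult_0_r. reflexivity. Qed.

Lemma scal_m1 x : scal (-1) x = opp x.
Proof.
  apply opp_unique. rewrite <- (cb_scal_1 x) at 1. rewrite <- cb_scal_distr_r.
  replace (1 + -1) with 0 by ring. apply scal_0_l.
Qed.

Lemma scal_opp_l a x : scal (- a) x = opp (scal a x).
Proof. rewrite <- scal_m1, cb_scal_assoc. f_equal; ring. Qed.

Lemma scal_opp_r a x : scal a (opp x) = opp (scal a x).
Proof. rewrite <- !scal_m1, !cb_scal_assoc. f_equal; ring. Qed.

Lemma opp_opp x : opp (opp x) = x.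
Proof. rewrite <- !scal_m1, cb_scal_assoc. replace (-1 * -1) with 1 by ring. apply cb_scal_1. Qed.

Lemma opp_add x y : opp (add x y) = add (opp x) (opp y).
Proof. rewrite <- !scal_m1. apply cb_scal_distr_l. Qed.

Lemma opp_zero : opp zero = zero.
Proof. rewrite <- scal_m1. apply scal_0_r. Qed.

Lemma add_swap x y z : add (add x y) z = add (add x z) y.
Proof. rewrite <- !cb_add_assoc, (cb_add_comm y). reflexivity. Qed.

Lemma add_4 x y z w : add (add x y) (add z w) = add (add x z) (add y w).
Proof. rewrite !cb_add_assoc, (add_swap x y z). reflexivity. Qed.

Lemma vsub_diag x : vsub x x = zero.
Proof. apply cb_add_opp. Qed.

Lemma vsub_add x y z w : vsub (add x y) (add z w) = add (vsub x z) (vsub y w).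
Proof. unfold vsub. rewrite opp_add, add_4. reflexivity. Qed.

Lemma vsub_0_r x : vsub x zero = x.
Proof. unfold vsub. rewrite opp_zero. apply cb_add_0. Qed.

Lemma add_vsub_r x y : add (vsub x y) y = x.
Proof. unfold vsub. rewrite <- cb_add_assoc, opp_add_l. apply cb_add_0. Qed.

Lemma vsub_add_r x y : vsub (add x y) y = x.
Proof. unfold vsub. rewrite <- cb_add_assoc, cb_add_opp. apply cb_add_0. Qed.

Lemma vsub_vsub x y z : vsub x (vsub y z) = add (vsub x y) z.
Proof. unfold vsub. rewrite opp_add, opp_opp, cb_add_assoc. reflexivity. Qed.

Lemma vsub_eq x y z : x = add z y -> vsub x y = z.
Proof. intros ->. apply vsub_add_r. Qed.

Lemma scal_vsub a x y : scal a (vsub x y) = vsub (scal a x) (scal a y).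
Proof. unfold vsub. rewrite cb_scal_distr_l, scal_opp_r. reflexivity. Qed.

Lemma scal_minus a b x : scal (a - b) x = vsub (scal a x) (scal b x).
Proof. unfold vsub, Rminus. rewrite cb_scal_distr_r, scal_opp_l. reflexivity. Qed.

Lemma vsub_swap x y : vsub x y = opp (vsub y x).
Proof. unfold vsub. rewrite opp_add, opp_opp, cb_add_comm. reflexivity. Qed.

Lemma norm_scal a x : nrm (scal a x) = Rabs a * nrm x.
Proof.
  pose proof (cb_norm_cscal a 0 x) as H. rewrite scal_0_l, cb_add_0 in H.
  rewrite H. f_equal. rewrite <- sqrt_Rsqr_abs. f_equal. unfold Rsqr. ring.
Qed.

Lemma norm_zero : nrm zero = 0.
Proof. rewrite <- (scal_0_l zero), norm_scal, Rabs_R0. ring. Qed.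

Lemma norm_opp x : nrm (opp x) = nrm x.
Proof. rewrite <- scal_m1, norm_scal. replace (Rabs (-1)) with 1. ring. rewrite Rabs_left; lra. Qed.

Lemma norm_nonneg x : 0 <= nrm x.
Proof.
  pose proof (cb_norm_triangle x (opp x)) as H.
  rewrite cb_add_opp, norm_zero, norm_opp in H. lra.
Qed.

Lemma norm_vsub_sym x y : nrm (vsub x y) = nrm (vsub y x).
Proof. rewrite vsub_swap, norm_opp. reflexivity. Qed.

Lemma norm_vsub_le x y : nrm (vsub x y) <= nrm x + nrm y.
Proof. unfold vsub. rewrite <- (norm_opp y). apply cb_norm_triangle. Qed.

Lemma norm_tri3 x y z : nrm (vsub x z) <= nrm (vsub x y) + nrm (vsub y z).
Proof.
  replace (vsub x z) with (add (vsub x y) (vsub y z)). apply cb_norm_triangle.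
  unfold vsub. rewrite <- cb_add_assoc, (cb_add_assoc (opp y) y), opp_add_l, add_0_l. reflexivity.
Qed.

End Alg.


Fixpoint rs (f : nat -> R) (n : nat) : R :=
  match n with O => 0 | S n => rs f n + f n end.

Lemma rs_sum_f f K : rs f (S K) = sum_f_R0 f K.
Proof. induction K; simpl in *. ring. rewrite <- IHK. reflexivity. Qed.

Lemma rs_le f g n : (forall i, (i < n)%nat -> f i <= g i) -> rs f n <= rs g n.
Proof. induction n; intro H; simpl. lra. apply Rplus_le_compat; auto. Qed.

Lemma rs_ext f g n : (forall i, (i < n)%nat -> f i = g i) -> rs f n = rs g n.
Proof. induction n; intro H; simpl. lra. rewrite IHn, H; auto. Qed.

Lemma rs_tele F n : rs (fun j => F j - F (S j)) n = F O - F n.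
Proof. induction n; simpl. ring. rewrite IHn. ring. Qed.

Lemma rs_scal c f n : rs (fun i => c * f i) n = c * rs f n.
Proof. induction n; simpl. ring. rewrite IHn. ring. Qed.

Lemma rs_nonneg f n : (forall i, 0 <= f i) -> 0 <= rs f n.
Proof. intro H; induction n; simpl. lra. specialize (H n). lra. Qed.

Lemma mono_inc (g : nat -> R) : (forall i, g i <= g (S i)) -> forall i j, (i <= j)%nat -> g i <= g j.
Proof. intros H i j Hij. induction Hij. lra. specialize (H m). lra. Qed.

Lemma mono_dec (g : nat -> R) : (forall i, g (S i) <= g i) -> forall i j, (i <= j)%nat -> g j <= g i.
Proof. intros H i j Hij. induction Hij. lra. specialize (H m). lra. Qed.

Lemma var_inc (g : nat -> R) : (forall i, g i <= g (S i)) -> forall m k,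
  rs (fun j => Rabs (g (S (m + j)) - g (m + j)%nat)) k = g (m + k)%nat - g m.
Proof.
  intros H m k; induction k; simpl. rewrite Nat.add_0_r; ring.
  rewrite IHk. rewrite Rabs_right by (specialize (H (m+k)%nat); lra).
  rewrite Nat.add_succ_r. ring.
Qed.

Lemma var_dec (g : nat -> R) : (forall i, g (S i) <= g i) -> forall m k,
  rs (fun j => Rabs (g (S (m + j)) - g (m + j)%nat)) k = g m - g (m + k)%nat.
Proof.
  intros H m k; induction k; simpl. rewrite Nat.add_0_r; ring.
  rewrite IHk. rewrite Rabs_left1 by (specialize (H (m+k)%nat); lra).
  rewrite Nat.add_succ_r. ring.
Qed.

Section Sums.
Variable X : CBanach.
Notation add := (@cb_add X).
Notation opp := (@cb_opp X).
Notation scal := (@cb_scal X).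
Notation nrm := (@cb_norm X).
Notation zero := (@cb_zero X).

Fixpoint vs (u : nat -> X) (n : nat) : X :=
  match n with O => zero | S n => add (vs u n) (u n) end.

Lemma vsum_vs u N : vsum X u 1 N = vs (fun i => u (S i)) N.
Proof. induction N; simpl. reflexivity. rewrite IHN. reflexivity. Qed.

Lemma vsum0_vs u K : vsum X u 0 K = vs u (S K).
Proof. induction K; simpl. rewrite add_0_l. reflexivity. rewrite IHK. reflexivity. Qed.

Lemma vs_ext u v n : (forall i, (i < n)%nat -> u i = v i) -> vs u n = vs v n.
Proof. induction n; intro H; simpl. reflexivity. rewrite IHn, H; auto. Qed.

Lemma vs_add u v n : vs (fun i => add (u i) (v i)) n = add (vs u n) (vs v n).
Proof. induction n; simpl. rewrite cb_add_0. reflexivity. rewrite IHn. apply add_4. Qed.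

Lemma vs_scal c u n : vs (fun i => scal c (u i)) n = scal c (vs u n).
Proof. induction n; simpl. rewrite scal_0_r. reflexivity. rewrite IHn, cb_scal_distr_l. reflexivity. Qed.

Lemma vs_vsub u v n : vs (fun i => vsub (u i) (v i)) n = vsub (vs u n) (vs v n).
Proof. induction n; simpl. rewrite vsub_0_r. reflexivity. rewrite IHn, vsub_add. reflexivity. Qed.

Lemma vs_shift u m k : vs u (m + k) = add (vs u m) (vs (fun j => u (m + j)%nat) k).
Proof. induction k; simpl. rewrite Nat.add_0_r, cb_add_0. reflexivity.
  rewrite Nat.add_succ_r. simpl. rewrite IHk, cb_add_assoc. reflexivity. Qed.

Lemma vs_norm u n : nrm (vs u n) <= rs (fun i => nrm (u i)) n.
Proof. induction n; simpl. rewrite norm_zero. lra.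
  eapply Rle_trans. apply cb_norm_triangle. lra. Qed.

Lemma vs_coef (q : nat -> X) (c : nat -> nat -> R) K N :
  vs (fun k => vs (fun i => scal (c k i) (q i)) N) K = vs (fun i => scal (rs (fun k => c k i) K) (q i)) N.
Proof.
  induction K; simpl.
  - symmetry. induction N; simpl. reflexivity. rewrite IHN, scal_0_l, cb_add_0. reflexivity.
  - rewrite IHK, <- vs_add. apply vs_ext. intros i _. rewrite cb_scal_distr_r. reflexivity.
Qed.

Lemma vs_coef_minus (q : nat -> X) (f g : nat -> R) N :
  vs (fun i => scal (f i - g i) (q i)) N = vsub (vs (fun i => scal (f i) (q i)) N) (vs (fun i => scal (g i) (q i)) N).
Proof. rewrite <- vs_vsub. apply vs_ext. intros; apply scal_minus. Qed.

Lemma vs_coef_plus (q : nat -> X) (f g : nat -> R) N :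
  vs (fun i => scal (f i + g i) (q i)) N = add (vs (fun i => scal (f i) (q i)) N) (vs (fun i => scal (g i) (q i)) N).
Proof. rewrite <- vs_add. apply vs_ext. intros; apply cb_scal_distr_r. Qed.

Lemma vs_coef_mult (q : nat -> X) c (f : nat -> R) N :
  vs (fun i => scal (c * f i) (q i)) N = scal c (vs (fun i => scal (f i) (q i)) N).
Proof. rewrite <- vs_scal. apply vs_ext. intros; rewrite cb_scal_assoc. reflexivity. Qed.

Lemma conv_unique u l1 l2 : seq_conv X u l1 -> seq_conv X u l2 -> l1 = l2.
Proof.
  intros H1 H2.
  assert (nrm (vsub l1 l2) = 0).
  { apply Rle_antisym; [|apply norm_nonneg]. apply Rnot_lt_le. intro Hp.
    destruct (H1 (nrm (vsub l1 l2) / 2)) as [M1 HM1]. lra.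
    destruct (H2 (nrm (vsub l1 l2) / 2)) as [M2 HM2]. lra.
    specialize (HM1 (Nat.max M1 M2) ltac:(lia)). specialize (HM2 (Nat.max M1 M2) ltac:(lia)).
    pose proof (norm_tri3 _ l1 (u (Nat.max M1 M2)) l2). rewrite norm_vsub_sym in HM1. lra. }
  apply cb_norm_eq0 in H. rewrite <- (add_vsub_r _ l1 l2), H, add_0_l. reflexivity.
Qed.

Lemma vlim_eq u l : seq_conv X u l -> vlim X u = l.
Proof.
  intro H. unfold vlim. apply (conv_unique u). apply epsilon_spec. exists l; exact H. exact H.
Qed.

Lemma conv_ext u v l : (forall n, u n = v n) -> seq_conv X u l -> seq_conv X v l.
Proof. intros E H e He. destruct (H e He) as [M HM]. exists M. intros n Hn. rewrite <- E. auto. Qed.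

Lemma conv_add u v l1 l2 : seq_conv X u l1 -> seq_conv X v l2 ->
  seq_conv X (fun n => add (u n) (v n)) (add l1 l2).
Proof.
  intros H1 H2 e He. destruct (H1 (e/2)) as [M1 HM1]. lra. destruct (H2 (e/2)) as [M2 HM2]. lra.
  exists (Nat.max M1 M2). intros n Hn. rewrite vsub_add.
  eapply Rle_lt_trans. apply cb_norm_triangle.
  specialize (HM1 n ltac:(lia)). specialize (HM2 n ltac:(lia)). lra.
Qed.

Lemma conv_scal c u l : seq_conv X u l -> seq_conv X (fun n => scal c (u n)) (scal c l).
Proof.
  intros H e He. destruct (H (e / (Rabs c + 1))) as [M HM].
  apply Rdiv_lt_0_compat. lra. pose proof (Rabs_pos c). lra.
  exists M. intros n Hn. rewrite <- scal_vsub, norm_scal.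
  specialize (HM n Hn). pose proof (Rabs_pos c). pose proof (norm_nonneg _ (vsub (u n) l)).
  apply Rle_lt_trans with ((Rabs c + 1) * nrm (vsub (u n) l)). nra.
  apply Rmult_lt_compat_l with (r := Rabs c + 1) in HM. 2: lra.
  replace ((Rabs c + 1) * (e / (Rabs c + 1))) with e in HM by (field; lra). exact HM.
Qed.

Lemma conv_opp u l : seq_conv X u l -> seq_conv X (fun n => opp (u n)) (opp l).
Proof. intro H. rewrite <- scal_m1. apply conv_ext with (fun n => scal (-1) (u n)).
  intro; apply scal_m1. apply conv_scal; auto. Qed.

Lemma conv_vsub u v l1 l2 : seq_conv X u l1 -> seq_conv X v l2 ->
  seq_conv X (fun n => vsub (u n) (v n)) (vsub l1 l2).
Proof. intros H1 H2. apply conv_add; auto. apply conv_opp; auto. Qed.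

Lemma conv_const l : seq_conv X (fun _ => l) l.
Proof. intros e He. exists O. intros. rewrite vsub_diag, norm_zero. lra. Qed.

Lemma conv_ev u v l : (exists N0, forall n, (N0 <= n)%nat -> u n = v n) -> seq_conv X u l -> seq_conv X v l.
Proof. intros [N0 E] H e He. destruct (H e He) as [M HM]. exists (Nat.max M N0). intros n Hn.
  rewrite <- E by lia. apply HM; lia. Qed.

Lemma conv_vs_fin (s : nat -> nat -> X) (l : nat -> X) K :
  (forall k, seq_conv X (s k) (l k)) -> seq_conv X (fun N => vs (fun k => s k N) K) (vs l K).
Proof. intro H. induction K; simpl. apply conv_const. apply conv_add; auto. Qed.

Lemma conv_norm_le s l b : seq_conv X s l -> (forall N, nrm (s N) <= b) -> nrm l <= b.
Proof.
  intros H Hb. apply Rnot_lt_le. intro Hl. destruct (H (nrm l - b)) as [M HM]. lra.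
  specialize (HM M (le_n _)). specialize (Hb M).
  pose proof (norm_tri3 _ l (s M) zero). idtac. rewrite !vsub_0_r in H0. rewrite (norm_vsub_sym _ l) in H0. lra.
Qed.

Lemma cauchy_conv s : (forall e, 0 < e -> exists M0, forall m M, (M0 <= m)%nat -> (m <= M)%nat ->
   nrm (vsub (s M) (s m)) < e) -> exists l, seq_conv X s l.
Proof.
  intro H. destruct (cb_complete s) as [l Hl].
  - intros e He. destruct (H e He) as [M0 HM]. exists M0. intros m n Hm Hn.
    change (nrm (vsub (s m) (s n)) < e). destruct (Nat.le_ge_cases m n). rewrite norm_vsub_sym. apply HM; auto. apply HM; auto.
  - exists l. exact Hl.
Qed.
End Sums.


Section Abel.
Variable X : CBanach.
Notation add := (@cb_add X).
Notation opp := (@cb_opp X).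
Notation scal := (@cb_scal X).
Notation nrm := (@cb_norm X).
Notation zero := (@cb_zero X).

Lemma grp1 (a b c d e : X) : add (add (vsub (add a b) c) (vsub c d)) e = add a (add b (vsub e d)).
Proof.
  unfold vsub. rewrite <- (cb_add_assoc (add a b) (opp c)), (cb_add_assoc (opp c) c), opp_add_l, add_0_l.
  rewrite <- !cb_add_assoc, (cb_add_comm (opp d) e). reflexivity.
Qed.

Lemma grp2 (x A q : X) : vsub (vsub x A) (vsub x (add A q)) = q.
Proof.
  rewrite vsub_vsub. unfold vsub.
  rewrite (add_swap _ x (opp A) (opp x)), cb_add_opp, add_0_l, cb_add_assoc, opp_add_l, add_0_l. reflexivity.
Qed.

Variables (q W : nat -> X).
Hypothesis HW : forall i, q i = vsub (W i) (W (S i)).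

Lemma abel_id (g : nat -> R) m k :
  add (vs X (fun j => scal (g (m+j)%nat) (q (m+j)%nat)) k) (scal (g (m+k)%nat) (W (m+k)%nat)) =
  add (scal (g m) (W m)) (vs X (fun j => scal (g (S (m+j)) - g (m+j)%nat) (W (S (m+j)))) k).
Proof.
  induction k.
  - simpl. rewrite Nat.add_0_r, add_0_l, cb_add_0. reflexivity.
  - simpl vs. rewrite Nat.add_succ_r.
    assert (E : vs X (fun j => scal (g (m + j)%nat) (q (m + j)%nat)) k =
      vsub (add (scal (g m) (W m)) (vs X (fun j => scal (g (S (m+j)) - g (m+j)%nat) (W (S (m+j)))) k))
           (scal (g (m+k)%nat) (W (m+k)%nat))).
    { symmetry. apply vsub_eq. symmetry. exact IHk. }
    rewrite E, HW, scal_vsub, scal_minus. apply grp1.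
Qed.

Lemma abel_bound (g : nat -> R) m k B :
  (forall j, (j <= k)%nat -> nrm (W (m+j)%nat) <= B) ->
  nrm (vs X (fun j => scal (g (m+j)%nat) (q (m+j)%nat)) k) <=
  B * (Rabs (g m) + Rabs (g (m+k)%nat) + rs (fun j => Rabs (g (S (m+j)) - g (m+j)%nat)) k).
Proof.
  intro HB.
  assert (B0 : 0 <= B). { specialize (HB O (Nat.le_0_l _)). pose proof (norm_nonneg _ (W (m+0)%nat)). lra. }
  pose proof (abel_id g m k) as E. symmetry in E. apply vsub_eq in E. rewrite <- E.
  eapply Rle_trans. apply norm_vsub_le. eapply Rle_trans. apply Rplus_le_compat_r. apply cb_norm_triangle.
  rewrite !norm_scal.
  assert (H1 : nrm (W m) <= B). { specialize (HB O (Nat.le_0_l _)). rewrite Nat.add_0_r in HB. exact HB. }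
  assert (H2 : nrm (W (m+k)%nat) <= B) by (apply HB; lia).
  assert (H3 : nrm (vs X (fun j => scal (g (S (m+j)) - g (m+j)%nat) (W (S (m+j)))) k) <=
     B * rs (fun j => Rabs (g (S (m+j)) - g (m+j)%nat)) k).
  { eapply Rle_trans. apply vs_norm. rewrite <- rs_scal. apply rs_le. intros j Hj.
    rewrite norm_scal. rewrite Rmult_comm. apply Rmult_le_compat_r. apply Rabs_pos.
    rewrite <- Nat.add_succ_r. apply HB. lia. }
  pose proof (Rabs_pos (g m)). pose proof (Rabs_pos (g (m+k)%nat)).
  assert (Rabs (g m) * nrm (W m) <= Rabs (g m) * B) by (apply Rmult_le_compat_l; auto).
  assert (Rabs (g (m+k)%nat) * nrm (W (m+k)%nat) <= Rabs (g (m+k)%nat) * B) by (apply Rmult_le_compat_l; auto).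
  nra.
Qed.
End Abel.

Section Conv.
Variable X : CBanach.
Notation add := (@cb_add X).
Notation opp := (@cb_opp X).
Notation scal := (@cb_scal X).
Notation nrm := (@cb_norm X).
Notation zero := (@cb_zero X).

Definition BV (g : nat -> R) (G V : R) :=
  (forall i, Rabs (g i) <= G) /\ (forall m k, rs (fun j => Rabs (g (S (m+j)) - g (m+j)%nat)) k <= V).

Lemma conv_BV (q : nat -> X) (x : X) (g : nat -> R) G V :
  seq_conv X (vs X q) x -> BV g G V ->
  exists l, seq_conv X (fun N => vs X (fun i => scal (g i) (q i)) N) l.
Proof.
  intros Hx [HG HV]. apply cauchy_conv. intros e He.
  assert (G0 : 0 <= G) by (specialize (HG O); pose proof (Rabs_pos (g O)); lra).
  assert (V0 : 0 <= V) by (specialize (HV O O); simpl in HV; lra).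
  set (B := e / (2*G + V + 1)).
  assert (B0 : 0 < B) by (apply Rdiv_lt_0_compat; lra).
  destruct (Hx B B0) as [M0 HM0]. exists M0. intros m M Hm HmM.
  replace M with (m + (M - m))%nat by lia. rewrite vs_shift, cb_add_comm, vsub_add_r.
  eapply Rle_lt_trans. apply (abel_bound X q (fun i => vsub x (vs X q i))).
  - intro i. simpl. symmetry. apply grp2.
  - intros j _. rewrite norm_vsub_sym. left. apply HM0. lia.
  - specialize (HV m (M - m)%nat). pose proof (HG m). pose proof (HG (m + (M-m))%nat).
    apply Rle_lt_trans with (B * (2*G + V)). apply Rmult_le_compat_l; lra.
    unfold B. apply Rmult_lt_reg_r with (2*G+V+1). lra. field_simplify; lra.
Qed.

End Conv.


Definition eK (y : R) (K : nat) := sum_f_R0 (fun k => / INR (fact k) * y ^ k) K.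
Definition RK (s : R) (K : nat) := exp s - eK s K.

Lemma eK_cv y : Un_cv (eK y) (exp y).
Proof. unfold exp. destruct (exist_exp y) as [l Hl]. simpl. exact Hl. Qed.

Lemma eK_0 K : eK 0 K = 1.
Proof. unfold eK. induction K; simpl. field. rewrite IHK. simpl. ring. Qed.

Lemma eK_S y n : eK y (S n) = eK y n + / INR (fact (S n)) * y ^ (S n).
Proof. reflexivity. Qed.

Lemma pow_diff a b n : a <= b <= 0 -> Rabs (a ^ n - b ^ n) <= (-a) ^ n - (-b) ^ n.
Proof.
  intro H. replace a with (-1 * (-a)) at 1 by ring. replace b with (-1 * (-b)) at 1 by ring.
  rewrite !Rpow_mult_distr, <- Rmult_minus_distr_l, Rabs_mult, pow_1_abs, Rmult_1_l.
  rewrite Rabs_right. lra. assert ((-b)^n <= (-a)^n) by (apply pow_incr; lra). lra.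
Qed.

Lemma RL_fin a b K d : a <= b <= 0 ->
  Rabs ((eK a (K+d) - eK b (K+d)) - (eK a K - eK b K)) <=
  (eK (-a) (K+d) - eK (-b) (K+d)) - (eK (-a) K - eK (-b) K).
Proof.
  intro H. induction d.
  - rewrite Nat.add_0_r. replace (eK a K - eK b K - (eK a K - eK b K)) with 0 by ring.
    rewrite Rabs_R0. lra.
  - rewrite Nat.add_succ_r. rewrite !eK_S.
    pose proof (pow_diff a b (S (K+d)) H).
    assert (P : 0 < / INR (fact (S (K+d)))) by (apply Rinv_0_lt_compat, INR_fact_lt_0).
    replace (eK a (K + d) + / INR (fact (S (K + d))) * a ^ S (K + d) -
      (eK b (K + d) + / INR (fact (S (K + d))) * b ^ S (K + d)) - (eK a K - eK b K)) with
      ((eK a (K + d) - eK b (K+d) - (eK a K - eK b K)) + / INR (fact (S (K + d))) * (a ^ S (K + d) - b ^ S (K+d))) by ring.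
    eapply Rle_trans. apply Rabs_triang. rewrite Rabs_mult, (Rabs_right (/ _)) by lra.
    assert (/ INR (fact (S (K + d))) * Rabs (a ^ S (K + d) - b ^ S (K + d)) <=
            / INR (fact (S (K + d))) * ((-a) ^ S (K + d) - (-b) ^ S (K + d))) by (apply Rmult_le_compat_l; lra).
    lra.
Qed.

Lemma RL a b K : a <= b <= 0 ->
  Rabs ((eK a K - exp a) - (eK b K - exp b)) <= RK (-a) K - RK (-b) K.
Proof.
  intro H. unfold RK. apply Rabs_le. split.
  - apply Rle_cv_lim with
      (fun d => - ((eK (-a) (d+K) - eK (-b) (d+K)) - (eK (-a) K - eK (-b) K)))
      (fun d => (eK a K - eK b K) - (eK a (d+K) - eK b (d+K))).
    + intro d. rewrite Nat.add_comm. pose proof (RL_fin a b K d H) as R. 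
      pose proof (Rle_abs (eK a (K+d) - eK b (K+d) - (eK a K - eK b K))). lra.
    + replace (- (exp (-a) - eK (-a) K - (exp (-b) - eK (-b) K))) with
         (- ((exp (-a) - exp (-b)) - (eK (-a) K - eK (-b) K))) by ring.
      apply CV_opp. apply CV_minus. apply CV_minus; apply CV_shift', eK_cv.
      intros e He. exists O. intros. unfold Rdist. rewrite Rminus_diag, Rabs_R0. lra.
    + replace (eK a K - exp a - (eK b K - exp b)) with ((eK a K - eK b K) - (exp a - exp b)) by ring.
      apply CV_minus. intros e He. exists O. intros. unfold Rdist. rewrite Rminus_diag, Rabs_R0. lra.
      apply CV_minus; apply CV_shift', eK_cv.
  - apply Rle_cv_lim with
      (fun d => (eK a K - eK b K) - (eK a (d+K) - eK b (d+K)))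
      (fun d => ((eK (-a) (d+K) - eK (-b) (d+K)) - (eK (-a) K - eK (-b) K))).
    + intro d. rewrite Nat.add_comm. pose proof (RL_fin a b K d H) as R.
      pose proof (Rle_abs (- (eK a (K + d) - eK b (K + d) - (eK a K - eK b K)))). rewrite Rabs_Ropp in H0. lra.
    + replace (eK a K - exp a - (eK b K - exp b)) with ((eK a K - eK b K) - (exp a - exp b)) by ring.
      apply CV_minus. intros e He. exists O. intros. unfold Rdist. rewrite Rminus_diag, Rabs_R0. lra.
      apply CV_minus; apply CV_shift', eK_cv.
    + replace (exp (-a) - eK (-a) K - (exp (-b) - eK (-b) K)) with
         (((exp (-a) - exp (-b)) - (eK (-a) K - eK (-b) K))) by ring.
      apply CV_minus. apply CV_minus; apply CV_shift', eK_cv.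
      intros e He. exists O. intros. unfold Rdist. rewrite Rminus_diag, Rabs_R0. lra.
Qed.

Lemma RK_0 K : RK 0 K = 0.
Proof. unfold RK. rewrite eK_0, exp_0. ring. Qed.

Lemma RK_mono s s' K : 0 <= s <= s' -> RK s K <= RK s' K.
Proof.
  intro H. pose proof (RL (-s') (-s) K ltac:(lra)). rewrite !Ropp_involutive in H0.
  pose proof (Rabs_pos (eK (- s') K - exp (- s') - (eK (- s) K - exp (- s)))). lra.
Qed.

Lemma RK_nonneg s K : 0 <= s -> 0 <= RK s K.
Proof. intro. rewrite <- (RK_0 K). apply RK_mono. lra. Qed.

Lemma RK_lim s : Un_cv (RK s) 0.
Proof.
  unfold RK. replace 0 with (exp s - exp s) by ring. apply CV_minus.
  intros e He. exists O. intros. unfold Rdist. rewrite Rminus_diag, Rabs_R0. lra.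
  apply eK_cv.
Qed.

Lemma eK_RK_bound a K : a <= 0 -> Rabs (eK a K - exp a) <= RK (-a) K.
Proof.
  intro H. pose proof (RL a 0 K ltac:(lra)). rewrite eK_0, exp_0, Ropp_0, RK_0 in H0.
  replace (eK a K - exp a - (1 - 1)) with (eK a K - exp a) in H0 by ring. lra.
Qed.



Definition indN (N : nat) (i : nat) : R := if Nat.ltb i N then 1 else 0.

Lemma indN_lt N i : (i < N)%nat -> indN N i = 1.
Proof. intro H. unfold indN. apply Nat.ltb_lt in H. rewrite H. reflexivity. Qed.
Lemma indN_ge N i : (N <= i)%nat -> indN N i = 0.
Proof. intro H. unfold indN. apply Nat.ltb_ge in H. rewrite H. reflexivity. Qed.

Lemma var_final (e : nat -> R) N' : (forall i, e i <= e (S i)) -> (forall i, 0 < e i <= 1) -> forall M,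
  Rabs (e O - 1 + indN (S N') O) + Rabs (e M - 1 + indN (S N') M) +
  rs (fun j => Rabs ((e (S j) - 1 + indN (S N') (S j)) - (e j - 1 + indN (S N') j))) M
  <= 2 * e N' + 2 * (1 - e (S N')).
Proof.
  intros Hi He M.
  set (f := fun i => e i - 1 + indN (S N') i).
  change (Rabs (f O) + Rabs (f M) + rs (fun j => Rabs (f (S j) - f j)) M <= 2 * e N' + 2 * (1 - e (S N'))).
  assert (Hm : forall i j, (i <= j)%nat -> e i <= e j) by (apply mono_inc; auto).
  assert (F : forall M, rs (fun j => Rabs (f (S j) - f j)) M =
     if Nat.leb M N' then e M - e O else (e N' - e O) + (1 - e (S N') + e N') + (e M - e (S N'))).
  { induction M0 as [|M0 IH].
    - simpl. ring.
    - simpl rs. rewrite IH. unfold f.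
      destruct (le_lt_dec (S M0) N') as [L|L].
      + rewrite (indN_lt _ M0), (indN_lt _ (S M0)) by lia.
        assert (Nat.leb M0 N' = true) by (apply Nat.leb_le; lia).
        assert (Nat.leb (S M0) N' = true) by (apply Nat.leb_le; lia). rewrite H, H0.
        rewrite Rabs_right by (specialize (Hi M0); lra). ring.
      + destruct (Nat.eq_dec M0 N') as [Eq|Ne].
        * subst M0. rewrite (indN_lt _ N'), (indN_ge _ (S N')) by lia.
          assert (Nat.leb N' N' = true) by (apply Nat.leb_le; lia).
          assert (Nat.leb (S N') N' = false) by (apply Nat.leb_gt; lia). rewrite H, H0.
          rewrite Rabs_left1 by (pose proof (He (S N')); pose proof (He N'); lra). ring.
        * rewrite (indN_ge _ M0), (indN_ge _ (S M0)) by lia.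
          assert (Nat.leb M0 N' = false) by (apply Nat.leb_gt; lia).
          assert (Nat.leb (S M0) N' = false) by (apply Nat.leb_gt; lia). rewrite H, H0.
          rewrite Rabs_right by (specialize (Hi M0); lra). ring. }
  rewrite F. unfold f. rewrite (indN_lt _ O) by lia.
  replace (e O - 1 + 1) with (e O) by ring. rewrite (Rabs_right (e O)) by (pose proof (He O); lra).
  destruct (le_lt_dec M N') as [L|L].
  - assert (Nat.leb M N' = true) by (apply Nat.leb_le; lia). rewrite H.
    rewrite (indN_lt _ M) by lia. replace (e M - 1 + 1) with (e M) by ring.
    rewrite Rabs_right by (pose proof (He M); lra).
    pose proof (Hm M N' L). pose proof (He (S N')). lra.
  - assert (Nat.leb M N' = false) by (apply Nat.leb_gt; lia). rewrite H.
    rewrite (indN_ge _ M) by lia. rewrite Rabs_left1 by (pose proof (He M); lra). lra.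
Qed.


Section Main.
Variables (X : CBanach) (Xs : nat -> X -> Prop) (p : nat -> X -> X).
Notation add := (@cb_add X).
Notation opp := (@cb_opp X).
Notation scal := (@cb_scal X).
Notation nrm := (@cb_norm X).
Notation zero := (@cb_zero X).
Hypothesis Hsub : forall n, (1 <= n)%nat -> closed_subspace X (Xs n).
Hypothesis Hin : forall x n, (1 <= n)%nat -> Xs n (p n x).
Hypothesis Hser : forall x, series_conv X 1 (fun n => p n x) x.
Hypothesis Huniq : forall x (y : nat -> X), (forall n, (1 <= n)%nat -> Xs n (y n)) ->
      series_conv X 1 y x -> forall n, (1 <= n)%nat -> y n = p n x.
Variables (a : nat -> R) (t : R).
Hypothesis Ha : forall n, (1 <= n)%nat -> 0 < a n.
Hypothesis Hmono : forall n, (1 <= n)%nat -> a n <= a (S n).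
Hypothesis Ht : 0 < t.

Definition qq x i := p (S i) x.
Definition TT (y : X) := scal (- t) (Ainv a p y).
Definition hh j i := (/ a (S i)) ^ j.
Definition vv i := - t * / a (S i).

Lemma Pconv x : seq_conv X (vs X (qq x)) x.
Proof. apply conv_ext with (fun N => vsum X (fun n => p n x) 1 N). intro; apply vsum_vs. apply Hser. Qed.

Lemma inva_dec i : / a (S (S i)) <= / a (S i).
Proof. apply Rinv_le_contravar. apply Ha; lia. apply Hmono; lia. Qed.

Lemma inva_pos i : 0 < / a (S i).
Proof. apply Rinv_0_lt_compat, Ha; lia. Qed.

Lemma hh_dec j i : hh j (S i) <= hh j i.
Proof. unfold hh. apply pow_incr. pose proof (inva_dec i). pose proof (inva_pos (S i)). lra. Qed.

Lemma hh_nonneg j i : 0 <= hh j i.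
Proof. unfold hh. apply pow_le. left; apply inva_pos. Qed.

Lemma hh_BV j : BV (hh j) (hh j O) (hh j O).
Proof.
  split.
  - intro i. rewrite Rabs_right by (apply Rle_ge, hh_nonneg). apply (mono_dec (hh j)). apply hh_dec. lia.
  - intros m k. rewrite var_dec by apply hh_dec. pose proof (hh_nonneg j (m+k)).
    pose proof (mono_dec (hh j) (hh_dec j) O m ltac:(lia)). lra.
Qed.

Lemma Lc x j : exists S, forall c, seq_conv X (fun N => vs X (fun i => scal (c * hh j i) (qq x i)) N) (scal c S).
Proof.
  destruct (conv_BV X (qq x) x (hh j) _ _ (Pconv x) (hh_BV j)) as [S HS].
  exists S. intro c. eapply conv_ext. 2: apply (conv_scal _ c _ _ HS).
  intro n. simpl. rewrite vs_coef_mult. reflexivity.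
Qed.

Lemma Tk x k : seq_conv X (fun N => vs X (fun i => scal ((-t)^k * hh k i) (qq x i)) N) (Nat.iter k TT x).
Proof.
  induction k.
  - simpl. eapply conv_ext. 2: apply Pconv. intro n. apply vs_ext. intros i _.
    unfold hh. simpl. rewrite Rmult_1_r, cb_scal_1. reflexivity.
  - set (z := Nat.iter k TT x). change (Nat.iter (S k) TT x) with (TT z).
    assert (Hp : forall n, (1 <= n)%nat -> p n z = scal ((-t)^k * (/ a n)^k) (p n x)).
    { intros n Hn. symmetry. apply (Huniq z (fun n => scal ((-t)^k * (/ a n)^k) (p n x))); auto.
      - intros m Hm. destruct (Hsub m Hm) as [_ [_ [Hsc _]]]. apply Hsc, Hin, Hm.
      - unfold series_conv. eapply conv_ext. 2: exact IHk. intro N. rewrite vsum_vs. reflexivity. }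
    destruct (Lc x (S k)) as [Sx HS].
    assert (HA : Ainv a p z = scal ((-t)^k) Sx).
    { unfold Ainv, series_sum. apply vlim_eq. eapply conv_ext. 2: apply (HS ((-t)^k)).
      intro N. rewrite vsum_vs. apply vs_ext. intros i _. rewrite Hp by lia. rewrite cb_scal_assoc.
      unfold qq, hh. f_equal. simpl. ring. }
    unfold TT. rewrite HA, cb_scal_assoc.
    replace (-t * (-t)^k) with ((-t)^(S k)) by (simpl; ring). apply HS.
Qed.

Lemma partial x K : seq_conv X (fun N => vs X (fun i => scal (eK (vv i) K) (qq x i)) N)
   (vs X (fun k => scal (/ INR (fact k)) (Nat.iter k TT x)) (S K)).
Proof.
  eapply conv_ext. 2: apply (conv_vs_fin X (fun k N => vs X (fun i => scal (/ INR (fact k) * ((-t)^k * hh k i)) (qq x i)) N)).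
  - intro N. cbv beta. rewrite vs_coef. apply vs_ext. intros i _. f_equal.
    rewrite rs_sum_f. unfold eK. apply sum_eq. intros k _. unfold vv, hh. rewrite Rpow_mult_distr. ring.
  - intro k. eapply conv_ext. 2: apply (conv_scal _ (/ INR (fact k)) _ _ (Tk x k)).
    intro n. cbv beta. symmetry. apply (vs_coef_mult X (qq x) (/ INR (fact k)) (fun i => (-t)^k * hh k i)).
Qed.

Lemma exp_le_exp x y : x <= y -> exp x <= exp y.
Proof. intros [H|H]. left; apply exp_increasing; auto. subst; lra. Qed.

Lemma vv_inc i : vv i <= vv (S i).
Proof. unfold vv. pose proof (inva_dec i). nra. Qed.

Lemma vv_neg i : vv i <= 0.
Proof. unfold vv. pose proof (inva_pos i). nra. Qed.

Lemma ev_BV : BV (fun i => exp (vv i)) 1 1.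
Proof.
  assert (Hi : forall i, exp (vv i) <= exp (vv (S i))) by (intro; apply exp_le_exp, vv_inc).
  assert (H1 : forall i, exp (vv i) <= 1) by (intro; rewrite <- exp_0; apply exp_le_exp, vv_neg).
  split.
  - intro i. rewrite Rabs_right by (left; apply exp_pos). apply H1.
  - intros m k. rewrite (var_inc (fun i => exp (vv i))) by apply Hi.
    pose proof (exp_pos (vv m)). pose proof (H1 (m+k)%nat). lra.
Qed.

Lemma opexp_val x B : (forall i, nrm (vsub x (vs X (qq x) i)) <= B) ->
  exists W, seq_conv X (fun N => vs X (fun i => scal (exp (vv i)) (qq x i)) N) W /\
    semigroup_Ainv a p t x = W.
Proof.
  intro HB. destruct (conv_BV X (qq x) x _ _ _ (Pconv x) ev_BV) as [W HW].
  exists W. split. exact HW.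
  unfold semigroup_Ainv, opexp, series_sum. apply vlim_eq.
  eapply conv_ext. intro K. symmetry. apply vsum0_vs. fold TT.
  assert (B0 : 0 <= B) by (specialize (HB O); pose proof (norm_nonneg _ (vsub x (vs X (qq x) 0))); lra).
  intros e He. set (c := - vv O).
  destruct (RK_lim c (e / (3 * B + 1))) as [K0 HK0]. apply Rdiv_lt_0_compat; lra.
  exists K0. intros K HK. specialize (HK0 K HK). unfold Rdist in HK0. rewrite Rminus_0_r in HK0.
  assert (Hc : 0 <= RK c K) by (apply RK_nonneg; unfold c; pose proof (vv_neg O); lra).
  rewrite Rabs_right in HK0 by lra.
  assert (Hb : nrm (vsub (vs X (fun k => scal (/ INR (fact k)) (Nat.iter k TT x)) (S K)) W) <= B * (3 * RK c K)).
  { eapply conv_norm_le. apply (conv_vsub _ _ _ _ _ (partial x K) HW).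
    intro N. cbv beta. rewrite <- vs_coef_minus.
    pose proof (abel_bound X (qq x) (fun i => vsub x (vs X (qq x) i))) as AB.
    refine (Rle_trans _ _ _ (AB _ (fun i => eK (vv i) K - exp (vv i)) O N B _) _).
    - intro i. simpl. symmetry. apply grp2.
    - intros j _. apply HB.
    - simpl. apply Rmult_le_compat_l. exact B0.
      assert (G : forall i, Rabs (eK (vv i) K - exp (vv i)) <= RK c K).
      { intro i. eapply Rle_trans. apply eK_RK_bound, vv_neg. apply RK_mono. pose proof (vv_neg i).
        pose proof (mono_inc vv vv_inc O i ltac:(lia)). unfold c. lra. }
      assert (V : rs (fun j => Rabs (eK (vv (S j)) K - exp (vv (S j)) - (eK (vv j) K - exp (vv j)))) N <= RK c K).
      { eapply Rle_trans. apply rs_le with (g := fun j => RK (- vv j) K - RK (- vv (S j)) K).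
        intros j _. rewrite Rabs_minus_sym. apply RL. split. apply vv_inc. apply vv_neg.
        rewrite rs_tele. pose proof (RK_nonneg (- vv N) K). pose proof (vv_neg N). unfold c. lra. }
      pose proof (G O). pose proof (G N). lra. }
  eapply Rle_lt_trans. exact Hb.
  apply Rle_lt_trans with ((3 * B + 1) * RK c K). nra.
  apply Rmult_lt_compat_l with (r := 3 * B + 1) in HK0. 2: lra.
  replace ((3 * B + 1) * (e / (3 * B + 1))) with e in HK0 by (field; lra). exact HK0.
Qed.


Lemma vs_ind (q : nat -> X) N M : vs X (fun i => scal (indN N i) (q i)) M = vs X q (Nat.min M N).
Proof.
  induction M. reflexivity.
  destruct (le_lt_dec N M) as [L|L].
  - rewrite (Nat.min_r (S M) N) by lia. simpl vs. rewrite IHM, (Nat.min_r M N) by lia.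
    rewrite indN_ge by lia. rewrite scal_0_l, cb_add_0. reflexivity.
  - rewrite (Nat.min_l (S M) N) by lia. simpl vs. rewrite IHM, (Nat.min_l M N) by lia.
    rewrite indN_lt by lia. rewrite cb_scal_1. reflexivity.
Qed.

Lemma final_bound x B N' : (forall i, nrm (vsub x (vs X (qq x) i)) <= B) ->
  nrm (vsub (semigroup_Ainv a p t x) (Qn p (S N') x)) <= B * (2 * exp (vv N') + 2 * (1 - exp (vv (S N')))).
Proof.
  intro HB. destruct (opexp_val x B HB) as [W [HW HE]]. rewrite HE.
  unfold Qn, Pn. rewrite vsum_vs. fold (qq x). rewrite vsub_vsub.
  set (f := fun i => exp (vv i) - 1 + indN (S N') i).
  assert (HC : seq_conv X (fun M => vs X (fun i => scal (f i) (qq x i)) M) (add (vsub W x) (vs X (qq x) (S N')))).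
  { assert (H1 : seq_conv X (fun M => vs X (fun i => scal (indN (S N') i) (qq x i)) M) (vs X (qq x) (S N'))).
    { apply conv_ev with (fun _ => vs X (qq x) (S N')). 2: apply conv_const.
      exists (S N'). intros n Hn. rewrite vs_ind. rewrite Nat.min_r by lia. reflexivity. }
    assert (H2 : seq_conv X (fun M => vs X (fun i => scal 1 (qq x i)) M) x).
    { eapply conv_ext. 2: apply (Pconv x). intro n. apply vs_ext. intros; symmetry; apply cb_scal_1. }
    pose proof (conv_add _ _ _ _ _ (conv_vsub _ _ _ _ _ HW H2) H1) as H3.
    eapply conv_ext. 2: exact H3.
    intro M. cbv beta. unfold f. rewrite vs_coef_plus, vs_coef_minus. reflexivity. }
  eapply conv_norm_le. exact HC. intro M.
  pose proof (abel_bound X (qq x) (fun i => vsub x (vs X (qq x) i))) as AB.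
  refine (Rle_trans _ _ _ (AB _ f O M B _) _).
  - intro i. simpl. symmetry. apply grp2.
  - intros j _. apply HB.
  - simpl. apply Rmult_le_compat_l.
    + specialize (HB O). pose proof (norm_nonneg _ (vsub x (vs X (qq x) 0))). lra.
    + unfold f. apply (var_final (fun i => exp (vv i)) N').
      * intro; apply exp_le_exp, vv_inc.
      * intro i. split. apply exp_pos. rewrite <- exp_0. apply exp_le_exp, vv_neg.
Qed.

End Main.


Lemma Rsup_lub (S : R -> Prop) b : (forall y, S y -> y <= b) -> (exists y, S y) -> is_lub S (Rsup S).
Proof.
  intros Hb Hne. unfold Rsup. apply epsilon_spec.
  destruct (completeness S) as [m Hm]. exists b. exact Hb. exact Hne. exists m; exact Hm.
Qed.

Section Op.
Variable X : CBanach.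

Lemma opnorm_le (T : X -> X) b : (forall x, cb_norm x <= 1 -> cb_norm (T x) <= b) ->
  0 <= opnorm T <= b /\ (forall x, cb_norm x <= 1 -> cb_norm (T x) <= opnorm T).
Proof.
  intro H. unfold opnorm.
  assert (L : is_lub (fun y => exists x, cb_norm x <= 1 /\ y = cb_norm (T x))
     (Rsup (fun y => exists x, cb_norm x <= 1 /\ y = cb_norm (T x)))).
  { apply Rsup_lub with b. intros y [x [Hx ->]]. auto.
    exists (cb_norm (T cb_zero)). exists cb_zero. split; auto. rewrite norm_zero; lra. }
  destruct L as [U Lst]. split; [split|].
  - eapply Rle_trans. apply (norm_nonneg _ (T cb_zero)). apply U. exists cb_zero. split; auto. rewrite norm_zero; lra.
  - apply Lst. intros y [x [Hx ->]]. auto.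
  - intros x Hx. apply U. exists x. auto.
Qed.
End Op.

Section K.
Variables (X : CBanach) (Xs : nat -> X -> Prop) (p : nat -> X -> X).
Hypothesis HP : exists M, forall N x, (1 <= N)%nat -> cb_norm (Pn p N x) <= M * cb_norm x.

Lemma Pn_bound N : (1 <= N)%nat -> exists b, forall x, cb_norm x <= 1 -> cb_norm (Pn p N x) <= b.
Proof.
  intro HN. destruct HP as [M HM]. exists (Rabs M). intros x Hx.
  eapply Rle_trans. apply HM; auto. pose proof (norm_nonneg _ x). pose proof (Rle_abs M).
  pose proof (Rabs_pos M). nra.
Qed.

Lemma K_props : 0 <= Kconst p /\ forall N x, cb_norm x <= 1 -> cb_norm (Pn p N x) <= Kconst p.
Proof.
  destruct HP as [M HM].
  assert (Hb : forall N, (1 <= N)%nat -> opnorm (Pn p N) <= Rabs M).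
  { intros N HN. apply (opnorm_le X (Pn p N) (Rabs M)). intros x Hx.
    eapply Rle_trans. apply HM; auto. pose proof (norm_nonneg _ x). pose proof (Rle_abs M).
    pose proof (Rabs_pos M). nra. }
  assert (L : is_lub (fun y => exists N, (1 <= N)%nat /\ y = opnorm (Pn p N)) (Kconst p)).
  { apply Rsup_lub with (Rabs M). intros y [N [HN ->]]. auto. exists (opnorm (Pn p 1)). exists 1%nat. split; auto. }
  destruct L as [U _].
  assert (Hle : forall N, (1 <= N)%nat -> opnorm (Pn p N) <= Kconst p).
  { intros N HN. apply U. exists N. auto. }
  assert (Pb : forall N, (1 <= N)%nat -> exists b, forall x, cb_norm x <= 1 -> cb_norm (Pn p N x) <= b).
  { intros N HN. exists (Rabs M). intros x Hx.
    eapply Rle_trans. apply HM; auto. pose proof (norm_nonneg _ x). pose proof (Rle_abs M).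
    pose proof (Rabs_pos M). nra. }
  split.
  - destruct (Pb 1%nat (le_n _)) as [b Hb1]. pose proof (opnorm_le X (Pn p 1) b Hb1). specialize (Hle 1%nat (le_n _)). lra.
  - intros N x Hx. destruct N as [|N].
    + unfold Pn. simpl. rewrite norm_zero.
      destruct (Pb 1%nat (le_n _)) as [b Hb1]. pose proof (opnorm_le X (Pn p 1) b Hb1). specialize (Hle 1%nat (le_n _)). lra.
    + destruct (Pb (S N) ltac:(lia)) as [b Hb1]. pose proof (opnorm_le X (Pn p (S N)) b Hb1) as [_ H2].
      eapply Rle_trans. apply H2; auto. apply Hle. lia.
Qed.
End K.

Lemma part1 (X : CBanach) (Xs : nat -> X -> Prop) (p : nat -> X -> X) :
    schauder_decomposition Xs p ->
    forall a : nat -> R,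
        (forall n, (1 <= n)%nat -> 0 < a n) ->
        (forall n, (1 <= n)%nat -> a n <= a (S n)) ->
        forall (t : R) (N : nat), 0 < t -> (1 <= N)%nat ->
          0 <= opnorm (fun x => vsub (semigroup_Ainv a p t x) (Qn p N x)) /\
          opnorm (fun x => vsub (semigroup_Ainv a p t x) (Qn p N x))
            <= 2 * (1 + Kconst p) * (exp (- t / a N) + 1 - exp (- t / a (S N))).
Proof.
  intros [Hsub [Hin [Hser [Huniq HP]]]] a Ha Hmono t N Ht HN.
  destruct N as [|N']. lia.
  destruct (K_props X p HP) as [K0 HK].
  assert (HB : forall x, cb_norm x <= 1 -> forall i, cb_norm (vsub x (vs X (qq X p x) i)) <= 1 + Kconst p).
  { intros x Hx i. eapply Rle_trans. apply norm_vsub_le.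
    assert (E : vs X (qq X p x) i = Pn p i x) by (unfold Pn; rewrite vsum_vs; reflexivity).
    rewrite E. specialize (HK i x Hx). lra. }
  destruct (opnorm_le X (fun x => vsub (semigroup_Ainv a p t x) (Qn p (S N') x))
     (2 * (1 + Kconst p) * (exp (- t / a (S N')) + 1 - exp (- t / a (S (S N')))))) as [H1 _].
  - intros x Hx. eapply Rle_trans.
    apply (final_bound X Xs p Hsub Hin Hser Huniq a t Ha Hmono Ht x (1 + Kconst p) N' (HB x Hx)).
    unfold vv, Rdiv. right. ring.
  - exact H1.
Qed.


Lemma div_le_div a b c d : 0 < b -> 0 < d -> a * d <= c * b -> a / b <= c / d.
Proof.
  intros Hb Hd H. apply Rmult_le_reg_r with (b * d). nra.
  replace (a / b * (b * d)) with (a * d) by (field; lra).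
  replace (c / d * (b * d)) with (c * b) by (field; lra). exact H.
Qed.

Lemma exp_INR_ge n : 2 ^ n <= exp (INR n).
Proof.
  induction n. simpl. rewrite exp_0. lra.
  rewrite S_INR, exp_plus. simpl. pose proof (exp_ineq1_le 1). pose proof (pow_lt 2 n ltac:(lra)).
  nra.
Qed.

Lemma exp_mINR n : exp (- INR n) <= (/ 2) ^ n.
Proof.
  rewrite exp_Ropp, pow_inv. apply Rinv_le_contravar. apply pow_lt; lra. apply exp_INR_ge.
Qed.

Lemma n_le_fact n : (n <= fact n)%nat.
Proof. induction n. simpl; lia. simpl. pose proof (lt_O_fact n). nia. Qed.

Theorem mainTheorem8 :
  forall (X : CBanach) (Xs : nat -> X -> Prop) (p : nat -> X -> X),
    schauder_decomposition Xs p ->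
    (forall a : nat -> R,
        (forall n, (1 <= n)%nat -> 0 < a n) ->
        (forall n, (1 <= n)%nat -> a n <= a (S n)) ->
        (forall M : R, exists n0, forall n, (n0 <= n)%nat -> M < a n) ->
        forall (t : R) (N : nat), 0 < t -> (1 <= N)%nat ->
          opnorm (fun x => vsub (semigroup_Ainv a p t x) (Qn p N x))
            <= 2 * (1 + Kconst p) * (exp (- t / a N) + 1 - exp (- t / a (S N))))
    /\
    (let a := fun n : nat => INR (fact n) ^ 3 in
     let tN := fun N : nat => INR N * INR (fact N) ^ 3 in
     exists l : R,
       Un_cv (fun M => sum_f_R0
                (fun k => opnorm (fun x => vsub (semigroup_Ainv a p (tN (S k)) x)
                                                (Qn p (S k) x))) M) l).
Proof.
  intros X Xs p HS. split.
  - intros a Ha Hm _ t N Ht HN. apply (part1 X Xs p HS a Ha Hm t N Ht HN).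
  - intros a tN.
    assert (Ha : forall n, (1 <= n)%nat -> 0 < a n) by (intros; unfold a; apply pow_lt, INR_fact_lt_0).
    assert (Hm : forall n, (1 <= n)%nat -> a n <= a (S n)).
    { intros n _. unfold a. apply pow_incr. split. left; apply INR_fact_lt_0.
      rewrite fact_simpl, mult_INR. pose proof (INR_fact_lt_0 n). pose proof (pos_INR n). rewrite S_INR. nra. }
    destruct (HS) as [_ [_ [_ [_ HP]]]].
    destruct (K_props X p HP) as [K0 _].
    set (C := 2 * (1 + Kconst p)).
    set (term := fun k => opnorm (fun x => vsub (semigroup_Ainv a p (tN (S k)) x) (Qn p (S k) x))).
    assert (Ht : forall k, 0 < tN (S k)) by (intro; unfold tN; apply Rmult_lt_0_compat; [apply lt_0_INR; lia | apply pow_lt, INR_fact_lt_0]).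
    assert (HT : forall k, 0 <= term k <= C * ((/2) ^ (S k) + / (INR (S k) * INR (S (S k))))).
    { intro k. destruct (part1 X Xs p HS a Ha Hm (tN (S k)) (S k) (Ht k) ltac:(lia)) as [T0 T1].
      split. exact T0. eapply Rle_trans. exact T1. unfold C. apply Rmult_le_compat_l. lra.
      assert (E1 : - tN (S k) / a (S k) = - INR (S k)).
      { unfold tN, a. pose proof (INR_fact_lt_0 (S k)). field. lra. }
      set (u := INR (S k)). set (w := INR (S (S k))).
      assert (Hu : 1 <= u) by (unfold u; rewrite S_INR; pose proof (pos_INR k); lra).
      assert (Hw : w = u + 1) by (unfold w, u; rewrite (S_INR (S k)); reflexivity).
      assert (E2 : tN (S k) / a (S (S k)) = u / w ^ 3).
      { unfold tN, a, u, w. rewrite (fact_simpl (S k)), mult_INR. pose proof (INR_fact_lt_0 (S k)).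
        pose proof (lt_0_INR (S (S k)) ltac:(lia)). field. lra. }
      rewrite E1. pose proof (exp_mINR (S k)). fold u in H.
      assert (E3 : 1 - exp (- tN (S k) / a (S (S k))) <= u / w ^ 3).
      { pose proof (exp_ineq1_le (- tN (S k) / a (S (S k)))). unfold Rdiv in *.
        rewrite <- E2. lra. }
      assert (E4 : u / w ^ 3 <= 1 / (u * w)).
      { apply div_le_div. apply pow_lt; lra. nra. rewrite Hw. simpl. nra. }
      unfold Rdiv in E4, E3 |- *. rewrite Rmult_1_l in E4. fold u. lra. }
    assert (Hsum : forall M, sum_f_R0 term M <= C * ((1 - (/2) ^ (S M)) + (1 - / INR (S (S M))))).
    { induction M.
      - simpl sum_f_R0. eapply Rle_trans. apply (HT O). apply Req_le. simpl. field.
      - simpl sum_f_R0. eapply Rle_trans. apply Rplus_le_compat. exact IHM. apply (HT (S M)).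
        apply Req_le. rewrite !(S_INR (S (S M))), !(S_INR (S M)), !(S_INR M). simpl pow. field. pose proof (pos_INR M). lra. }
    assert (C0 : 0 <= C) by (unfold C; lra).
    destruct (growing_cv (fun M => sum_f_R0 term M)) as [l Hl].
    + intro n. simpl. pose proof (HT (S n)). lra.
    + exists (2 * C). intros y [n ->]. eapply Rle_trans. apply Hsum.
      pose proof (pow_lt (/2) (S n) ltac:(lra)). pose proof (Rinv_0_lt_compat (INR (S (S n))) (lt_0_INR (S (S n)) ltac:(lia))). assert (0 <= C * ((/2)^(S n) + / INR (S (S n)))) by (apply Rmult_le_pos; lra). lra.
    + exists l. exact Hl.
Qed.
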